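(* For every integer $d\ge0$, $\|B^{(d)}\|_\infty:=\sup_{k\ge0}\sum_{\ell\ge0}|b^{(d)}_{k,\ell}|\le 3d+2$.
   Context: Let $\{p_k\}_{k\ge0}$ be the orthonormal Legendre polynomials on $[-1,1]$: $p_k$ has exact degree $k$, positive leading coefficient, and $\int_{-1}^1 p_k(t)p_\ell(t)\,dt=\delta_{k\ell}$. Let $\Theta$ be the Heaviside function, $\Theta(x)=0$ for $x<0$ and $\Theta(x)=1$ for $x\ge0$. The Legendre basis matrix of degree $d$ is the infinite matrix $B^{(d)}=[b^{(d)}_{k,\ell}]_{k,\ell\ge0}$ with $b^{(d)}_{k,\ell}=\int_{-1}^1\int_{-1}^1 p_d(\tau)\Theta(\tau-\rho)p_k(\tau)p_\ell(\rho)\,d\rho\,d\tau$, i.e. the coefficient matrix of $p_d(t)\Theta(t-s)$. *)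

(* Defs.v *)
From Stdlib Require Import Reals.
From Coquelicot Require Import Coquelicot.
Open Scope R_scope.

(* Exact degree k with positive leading
   coefficient is then the hypothesis 0 < c k k. *)
Definition peval (c : nat -> nat -> R) (k : nat) (t : R) : R :=
  sum_f_R0 (fun i => c k i * t ^ i) k.

Definition Theta (x : R) : R := if Rlt_dec x 0 then 0 else 1.

Definition bmat (c : nat -> nat -> R) (d k l : nat) : R :=
  RInt (fun tau =>
    RInt (fun rho => peval c d tau * Theta (tau - rho) * peval c k tau * peval c l rho)
      (-1) 1) (-1) 1.

(* Main.v *)
Require Import Defs.
From Stdlib Require Import Reals Lra Lia.
From Coquelicot Require Import Coquelicot.
Open Scope R_scope.

Definition pol (m : nat) (f : R -> R) :=
  exists a : nat -> R, forall t, f t = sum_f_R0 (fun i => a i * t ^ i) m.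

Definition cont (f : R -> R) := forall x, continuous f x.

Lemma sum_shift (g : nat -> R) m :
  sum_f_R0 g (S m) = g 0%nat + sum_f_R0 (fun i => g (S i)) m.
Proof.
  induction m. simpl. ring.
  rewrite tech5, IHm, tech5. ring.
Qed.

Lemma pol_ext m f g : (forall t, f t = g t) -> pol m f -> pol m g.
Proof. intros H [a Ha]. exists a. intros t. rewrite <- H. apply Ha. Qed.

Lemma pol_peval c k : pol k (peval c k).
Proof. exists (c k). intros t. reflexivity. Qed.

Lemma pol_const x : pol 0 (fun _ => x).
Proof. exists (fun _ => x). intros t. simpl. ring. Qed.

Lemma pol_le m n f : (m <= n)%nat -> pol m f -> pol n f.
Proof.
  intros Hmn [a Ha].
  exists (fun i => if Compare_dec.le_dec i m then a i else 0).
  intros t. rewrite Ha.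
  replace n with (m + (n - m))%nat by lia.
  induction (n - m)%nat as [|j IH].
  - rewrite Nat.add_0_r. apply sum_eq. intros i Hi.
    destruct (Compare_dec.le_dec i m); [reflexivity|lia].
  - rewrite Nat.add_succ_r, tech5, <- IH.
    destruct (Compare_dec.le_dec (S (m + j)) m); [lia|]. ring.
Qed.

Lemma pol_plus m f g : pol m f -> pol m g -> pol m (fun t => f t + g t).
Proof.
  intros [a Ha] [b Hb]. exists (fun i => a i + b i). intros t.
  rewrite Ha, Hb, <- sum_plus. apply sum_eq. intros; ring.
Qed.

Lemma pol_scal m x f : pol m f -> pol m (fun t => x * f t).
Proof.
  intros [a Ha]. exists (fun i => x * a i). intros t.
  rewrite Ha, scal_sum. apply sum_eq. intros; ring.
Qed.

Lemma pol_plus' m n f g : pol m f -> pol n g -> pol (max m n) (fun t => f t + g t).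
Proof.
  intros Hf Hg. apply pol_plus; [apply (pol_le m) | apply (pol_le n)]; auto; lia.
Qed.

Lemma pol_sum n m (F : nat -> R -> R) :
  (forall i, (i <= m)%nat -> pol n (F i)) -> pol n (fun t => sum_f_R0 (fun i => F i t) m).
Proof.
  induction m; intros H.
  - simpl. apply H. lia.
  - apply pol_ext with (fun t => sum_f_R0 (fun i => F i t) m + F (S m) t).
    intros; rewrite tech5; reflexivity.
    apply pol_plus. apply IHm. intros; apply H; lia. apply H; lia.
Qed.

Lemma pol_xmul n g : pol n g -> pol (S n) (fun t => t * g t).
Proof.
  intros [a Ha]. exists (fun i => match i with O => 0 | S j => a j end).
  intros t. rewrite sum_shift, Ha, scal_sum. simpl. rewrite Rmult_0_l, Rplus_0_l.
  apply sum_eq. intros; ring.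
Qed.

Lemma pol_powmul i n g : pol n g -> pol (i + n) (fun t => t ^ i * g t).
Proof.
  intros Hg. induction i.
  - apply pol_ext with g. intros; simpl; ring. exact Hg.
  - apply pol_ext with (fun t => t * (t ^ i * g t)). intros; simpl; ring.
    simpl. apply pol_xmul. exact IHi.
Qed.

Lemma pol_mul m n f g : pol m f -> pol n g -> pol (m + n) (fun t => f t * g t).
Proof.
  intros [a Ha] Hg.
  apply pol_ext with (fun t => sum_f_R0 (fun i => a i * (t ^ i * g t)) m).
  { intros t. rewrite Ha, (Rmult_comm _ (g t)), scal_sum. apply sum_eq. intros; ring. }
  apply pol_sum. intros i Hi. apply pol_scal. eapply pol_le; [|apply pol_powmul; exact Hg]. lia.
Qed.

Lemma deriv_sum (a : nat -> R) m t :
  is_derive (fun t => sum_f_R0 (fun i => a i * t ^ i) m) t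
    (sum_f_R0 (fun i => a i * (INR i * t ^ pred i)) m).
Proof.
  induction m.
  - simpl. auto_derive. auto. ring.
  - apply is_derive_ext with (fun t => sum_f_R0 (fun i => a i * t ^ i) m + a (S m) * t ^ S m).
    intros; rewrite tech5; reflexivity.
    rewrite tech5. apply (is_derive_plus _ (fun t => a (S m) * t ^ S m)). exact IHm.
    apply is_derive_scal. 
    replace (INR (S m) * t ^ pred (S m)) with (INR (S m) * 1 * t ^ pred (S m)) by ring.
    apply (is_derive_pow (fun x => x)). apply (is_derive_id t).
Qed.

Lemma pol_cont m f : pol m f -> cont f.
Proof.
  intros [a Ha] x. apply continuous_ext with (fun t => sum_f_R0 (fun i => a i * t ^ i) m).
  intros; symmetry; apply Ha.
  apply (ex_derive_continuous (K:=R_AbsRing) (V:=R_NormedModule)). eexists. apply deriv_sum.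
Qed.

Lemma anti_sum (a : nat -> R) m t :
  is_derive (fun t => sum_f_R0 (fun i => a i / INR (S i) * t ^ S i) m) t
    (sum_f_R0 (fun i => a i * t ^ i) m).
Proof.
  induction m.
  - simpl. auto_derive. auto. field.
  - apply is_derive_ext with (fun t => sum_f_R0 (fun i => a i / INR (S i) * t ^ S i) m + a (S m) / INR (S (S m)) * t ^ S (S m)).
    intros; rewrite tech5; reflexivity.
    rewrite tech5. apply (is_derive_plus _ (fun t => a (S m) / INR (S (S m)) * t ^ S (S m))). exact IHm.
    auto_derive. auto. change (match m with | 0%nat => 1 | S _ => INR m + 1 end) with (INR (S m)).
    simpl pow. field. rewrite S_INR. pose proof (pos_INR m). lra.
Qed.

Lemma pol_anti m f : pol m f -> exists A, pol (S m) A /\ forall t, is_derive A t (f t).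
Proof.
  intros [a Ha]. exists (fun t => sum_f_R0 (fun i => a i / INR (S i) * t ^ S i) m). split.
  - exists (fun i => match i with O => 0 | S j => a j / INR (S j) end).
    intros t. rewrite sum_shift. simpl. rewrite Rmult_0_l, Rplus_0_l. reflexivity.
  - intros t. rewrite Ha. apply anti_sum.
Qed.

Lemma RInt_anti A g a b : (forall t, is_derive A t (g t)) -> cont g -> RInt g a b = A b - A a.
Proof.
  intros HA Hg. apply is_RInt_unique. apply (is_RInt_derive A g).
  intros; apply HA. intros; apply Hg.
Qed.

Lemma cont_exRInt f a b : cont f -> ex_RInt f a b.
Proof. intros H. apply (ex_RInt_continuous (V:=R_CompleteNormedModule)). intros; apply H. Qed.

Lemma cont_pol_plus f g : cont f -> cont g -> cont (fun x => f x + g x).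
Proof. intros Hf Hg x. apply (continuous_plus f g). apply Hf. apply Hg. Qed.

Lemma cont_mult f g : cont f -> cont g -> cont (fun x => f x * g x).
Proof. intros Hf Hg x. apply (continuous_mult f g). apply Hf. apply Hg. Qed.

Lemma cont_sum (F : nat -> R -> R) m : (forall i, cont (F i)) -> cont (fun t => sum_f_R0 (fun i => F i t) m).
Proof.
  intros H. induction m. simpl. apply H.
  intros x. apply continuous_ext with (fun t => sum_f_R0 (fun i => F i t) m + F (S m) t).
  intros; rewrite tech5; reflexivity. apply cont_pol_plus. apply IHm. apply H.
Qed.

Lemma RInt_plusR f g a b : cont f -> cont g ->
  RInt (fun x => f x + g x) a b = RInt f a b + RInt g a b.
Proof. intros Hf Hg. apply (RInt_plus f g); apply cont_exRInt; auto. Qed.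

Lemma RInt_minusR f g a b : cont f -> cont g ->
  RInt (fun x => f x - g x) a b = RInt f a b - RInt g a b.
Proof. intros Hf Hg. apply (RInt_minus f g); apply cont_exRInt; auto. Qed.

Lemma RInt_scalR f k a b : cont f -> RInt (fun x => k * f x) a b = k * RInt f a b.
Proof. intros Hf. apply (RInt_scal f a b k); apply cont_exRInt; auto. Qed.

Lemma RInt_sumR (F : nat -> R -> R) m a b : (forall i, cont (F i)) ->
  RInt (fun t => sum_f_R0 (fun i => F i t) m) a b = sum_f_R0 (fun i => RInt (F i) a b) m.
Proof.
  intros H. induction m. simpl. reflexivity.
  rewrite tech5, <- IHm, <- RInt_plusR. apply RInt_ext. intros; rewrite tech5; reflexivity.
  apply cont_sum. auto. auto.
Qed.

Lemma sum_zero m : sum_f_R0 (fun _ => 0) m = 0.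
Proof. induction m. simpl; ring. rewrite tech5, IHm. ring. Qed.

Section Orth.
Variable c : nat -> nat -> R.
Hypothesis Hlead : forall k, 0 < c k k.
Hypothesis Horth : forall k l,
      RInt (fun t => peval c k t * peval c l t) (-1) 1 = if Nat.eq_dec k l then 1 else 0.

Lemma span m q : pol m q -> exists be : nat -> R, forall t, q t = sum_f_R0 (fun j => be j * peval c j t) m.
Proof.
  revert q. induction m; intros q [a Ha].
  - exists (fun _ => a 0%nat / c 0%nat 0%nat). intros t. rewrite Ha. unfold peval. simpl.
    field. pose proof (Hlead 0). lra.
  - set (s := a (S m) / c (S m) (S m)).
    destruct (IHm (fun t => q t - s * peval c (S m) t)) as [be Hbe].
    { exists (fun i => a i - s * c (S m) i). intros t. rewrite Ha. unfold peval.
      rewrite scal_sum, <- minus_sum, tech5.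
      replace (a (S m) * t ^ S m - c (S m) (S m) * t ^ S m * s) with 0.
      rewrite Rplus_0_r. apply sum_eq. intros; ring.
      unfold s. field. pose proof (Hlead (S m)). lra. }
    exists (fun j => if Nat.eq_dec j (S m) then s else be j). intros t.
    rewrite tech5. destruct (Nat.eq_dec (S m) (S m)); [|lia].
    replace (q t) with ((q t - s * peval c (S m) t) + s * peval c (S m) t) by ring.
    rewrite Hbe. f_equal. apply sum_eq. intros i Hi. destruct (Nat.eq_dec i (S m)); [lia|reflexivity].
Qed.

Lemma ortho k m q : pol m q -> (m < k)%nat -> RInt (fun t => peval c k t * q t) (-1) 1 = 0.
Proof.
  intros Hq Hmk. destruct (span m q Hq) as [be Hbe].
  rewrite (RInt_ext _ (fun t => sum_f_R0 (fun j => be j * (peval c k t * peval c j t)) m)).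
  2:{ intros; rewrite Hbe, scal_sum. apply sum_eq. intros; ring. }
  rewrite RInt_sumR.
  - rewrite <- (sum_eq (fun _ => 0)). 
    + apply sum_zero.
    + intros i Hi. rewrite RInt_scalR, Horth. destruct (Nat.eq_dec k i); [lia|ring].
      apply (pol_cont (k + i)). apply pol_mul; apply pol_peval.
  - intros i. apply (pol_cont (k + i)). apply pol_scal. apply pol_mul; apply pol_peval.
Qed.

End Orth.

Lemma RInt_extR (f g : R -> R) a b : (forall x : R, Rmin a b < x < Rmax a b -> f x = g x) ->
  RInt f a b = RInt g a b.
Proof. apply RInt_ext. Qed.

Lemma cont_const x : cont (fun _ => x).
Proof. intros y. apply continuous_const. Qed.

Lemma cont_minus f g : cont f -> cont g -> cont (fun x => f x - g x).
Proof.
  intros Hf Hg x. apply continuous_ext with (fun x => f x + -1 * g x). intros y; change (f y + -1 * g y = f y - g y); ring.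
  apply (cont_pol_plus f (fun x => -1 * g x)). auto.
  apply (cont_mult (fun _ => -1) g). apply cont_const. auto.
Qed.

Lemma deriv_cont A g : (forall t, is_derive A t (g t)) -> cont A.
Proof.
  intros H x. apply (ex_derive_continuous (K:=R_AbsRing) (V:=R_NormedModule)). eexists. apply H.
Qed.

Lemma pol_minus_const m f x : pol m f -> pol m (fun t => f t - x).
Proof.
  intros H. apply pol_ext with (fun t => f t + (-x)). intros; ring.
  apply pol_plus. auto. apply (pol_le 0). lia. apply pol_const.
Qed.

Lemma pol_const_minus m f x : pol m f -> pol m (fun t => x - f t).
Proof.
  intros H. apply pol_ext with (fun t => x + (-1) * f t). intros; ring.
  apply pol_plus. apply (pol_le 0). lia. apply pol_const. apply pol_scal. auto.
Qed.

Lemma is_derive_Rmult f g x df dg : is_derive f x df -> is_derive g x dg ->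
  is_derive (fun y => f y * g y) x (df * g x + f x * dg).
Proof.
  intros Hf Hg. apply (is_derive_mult f g x df dg Hf Hg). intros; apply Rmult_comm.
Qed.

Lemma is_derive_minusc (f : R -> R) (x df k : R) : is_derive f x df -> is_derive (fun y => f y - k) x df.
Proof.
  intros Hf. assert (Hc : is_derive (fun _ : R => -k) x 0) by (auto_derive; auto; ring).
  pose proof (is_derive_plus f (fun _ => -k) x df 0 Hf Hc) as H.
  replace df with (plus df 0) by (unfold plus; simpl; ring).
  apply is_derive_ext with (2 := H). intros; unfold plus; simpl; ring.
Qed.

Lemma Theta_pos x : 0 < x -> Theta x = 1.
Proof. intros H. unfold Theta. destruct (Rlt_dec x 0); lra. Qed.
Lemma Theta_neg x : x < 0 -> Theta x = 0.
Proof. intros H. unfold Theta. destruct (Rlt_dec x 0); lra. Qed.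

Section Main.
Variable c : nat -> nat -> R.
Hypothesis Hlead : forall k, 0 < c k k.
Hypothesis Horth : forall k l,
      RInt (fun t => peval c k t * peval c l t) (-1) 1 = if Nat.eq_dec k l then 1 else 0.
Variables d k : nat.
Let f := fun t => peval c d t * peval c k t.
Variable Af : R -> R.
Hypothesis HAf : forall t, is_derive Af t (f t).
Hypothesis HAfp : pol (S (d + k)) Af.
Let Q := fun t => Af 1 - Af t.

Lemma pcont j : cont (peval c j).
Proof. apply (pol_cont j). apply pol_peval. Qed.

Lemma fcont : cont f.
Proof. apply (pol_cont (d + k)). apply pol_mul; apply pol_peval. Qed.

Lemma Qcont : cont Q.
Proof. apply cont_minus. apply cont_const. apply (deriv_cont Af f HAf). Qed.

Section L.
Variable l : nat.
Variable Al : R -> R.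
Hypothesis HAl : forall t, is_derive Al t (peval c l t).

Lemma inner tau : -1 < tau < 1 ->
  RInt (fun rho => peval c d tau * Theta (tau - rho) * peval c k tau * peval c l rho) (-1) 1
  = f tau * (Al tau - Al (-1)).
Proof.
  intros Ht. set (g := fun rho => peval c d tau * Theta (tau - rho) * peval c k tau * peval c l rho).
  assert (E1 : forall x, Rmin (-1) tau < x < Rmax (-1) tau -> f tau * peval c l x = g x).
  { intros x Hx. rewrite Rmin_left, Rmax_right in Hx by lra. unfold g, f.
    rewrite Theta_pos by lra. ring. }
  assert (E2 : forall x, Rmin tau 1 < x < Rmax tau 1 -> 0 = g x).
  { intros x Hx. rewrite Rmin_left, Rmax_right in Hx by lra. unfold g.
    rewrite Theta_neg by lra. ring. }
  assert (X1 : ex_RInt g (-1) tau).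
  { apply (ex_RInt_ext _ _ _ _ E1). apply cont_exRInt.
    apply (cont_mult (fun _ => f tau)). apply cont_const. apply pcont. }
  assert (X2 : ex_RInt g tau 1).
  { apply (ex_RInt_ext _ _ _ _ E2). apply cont_exRInt. apply cont_const. }
  rewrite <- (RInt_Chasles g (-1) tau 1 X1 X2).
  rewrite <- (RInt_ext _ _ _ _ E1), <- (RInt_ext _ _ _ _ E2).
  rewrite RInt_const, RInt_scalR by apply pcont.
  rewrite (RInt_anti Al) by (auto; apply pcont).
  unfold plus, scal; simpl. unfold mult; simpl. ring.
Qed.

Lemma bmat_eq1 : bmat c d k l = RInt (fun tau => f tau * (Al tau - Al (-1))) (-1) 1.
Proof.
  unfold bmat. apply RInt_ext. intros x Hx. rewrite Rmin_left, Rmax_right in Hx by lra.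
  apply inner. lra.
Qed.

Lemma Alcont : cont Al.
Proof. apply (deriv_cont Al _ HAl). Qed.

Lemma byparts : RInt (fun tau => f tau * (Al tau - Al (-1))) (-1) 1 =
  RInt (fun tau => Q tau * peval c l tau) (-1) 1.
Proof.
  set (H := fun t => (Af t - Af 1) * (Al t - Al (-1))).
  set (dH := fun t => f t * (Al t - Al (-1)) + (Af t - Af 1) * peval c l t).
  assert (C1 : cont (fun tau => f tau * (Al tau - Al (-1)))).
  { apply cont_mult. apply fcont. apply cont_minus. apply Alcont. apply cont_const. }
  assert (C2 : cont (fun tau => Q tau * peval c l tau)).
  { apply cont_mult. apply Qcont. apply pcont. }
  assert (E : RInt dH (-1) 1 = H 1 - H (-1)).
  { apply RInt_anti.
    - intros t. unfold H, dH. apply (is_derive_Rmult (fun t => Af t - Af 1) (fun t => Al t - Al (-1))); apply is_derive_minusc; auto.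
    - unfold dH. apply cont_pol_plus. auto. apply cont_mult. apply cont_minus.
      apply (deriv_cont Af f HAf). apply cont_const. apply pcont. }
  assert (E0 : H 1 - H (-1) = 0) by (unfold H; ring).
  rewrite E0 in E.
  rewrite (RInt_extR dH (fun t => f t * (Al t - Al (-1)) - Q t * peval c l t)) in E.
  2:{ intros; unfold dH, Q; ring. }
  rewrite RInt_minusR in E by auto. lra.
Qed.

Lemma bmat_eq : bmat c d k l = RInt (fun tau => Q tau * peval c l tau) (-1) 1.
Proof. rewrite bmat_eq1. apply byparts. Qed.

Hypothesis HAlp : pol (S l) Al.

Lemma band_lo : (l + d + 1 < k)%nat -> bmat c d k l = 0.
Proof.
  intros Hl. rewrite bmat_eq1.
  rewrite (RInt_extR _ (fun t => peval c k t * (peval c d t * (Al t - Al (-1))))).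
  2:{ intros; unfold f; ring. }
  apply (ortho c Hlead Horth k (d + S l)).
  apply pol_mul. apply pol_peval. apply pol_minus_const. auto. lia.
Qed.

End L.

Lemma band_hi l : (k + d + 1 < l)%nat -> RInt (fun tau => Q tau * peval c l tau) (-1) 1 = 0.
Proof.
  intros Hl.
  rewrite (RInt_extR _ (fun t => peval c l t * Q t)).
  2:{ intros; unfold Q; ring. }
  apply (ortho c Hlead Horth l (S (d + k))).
  apply pol_const_minus. auto. lia.
Qed.

End Main.

Lemma sum_delta (b : nat -> R) l N : (l <= N)%nat ->
  sum_f_R0 (fun j => b j * (if Nat.eq_dec l j then 1 else 0)) N = b l.
Proof.
  assert (Z : forall M, (M < l)%nat -> sum_f_R0 (fun j => b j * (if Nat.eq_dec l j then 1 else 0)) M = 0).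
  { induction M; intros HM. simpl. destruct (Nat.eq_dec l 0); [lia|ring].
    rewrite tech5, IHM by lia. destruct (Nat.eq_dec l (S M)); [lia|ring]. }
  induction N; intros HN.
  - simpl. destruct (Nat.eq_dec l 0); [subst; ring|lia].
  - rewrite tech5. destruct (Nat.eq_dec l (S N)).
    + subst. rewrite Z by lia. ring.
    + rewrite IHN by lia. ring.
Qed.

Section Bessel.
Variable c : nat -> nat -> R.
Hypothesis Hlead : forall k, 0 < c k k.
Hypothesis Horth : forall k l,
      RInt (fun t => peval c k t * peval c l t) (-1) 1 = if Nat.eq_dec k l then 1 else 0.
Variable Q : R -> R.
Hypothesis HQ : cont Q.
Variable N : nat.
Let b l := RInt (fun t => Q t * peval c l t) (-1) 1.
Let S t := sum_f_R0 (fun l => b l * peval c l t) N.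

Lemma pc j : cont (peval c j).
Proof. apply (pol_cont j). apply pol_peval. Qed.

Lemma Scont : cont S.
Proof. apply cont_sum. intros i. apply cont_mult. apply cont_const. apply pc. Qed.

Lemma SQ : RInt (fun t => S t * Q t) (-1) 1 = sum_f_R0 (fun l => b l * b l) N.
Proof.
  rewrite (RInt_extR _ (fun t => sum_f_R0 (fun l => b l * (Q t * peval c l t)) N)).
  2:{ intros. unfold S. rewrite Rmult_comm, scal_sum. apply sum_eq. intros; ring. }
  rewrite RInt_sumR. apply sum_eq. intros i Hi. rewrite RInt_scalR. reflexivity.
  apply cont_mult; auto; apply pc.
  intros i. apply cont_mult. apply cont_const. apply cont_mult; auto; apply pc.
Qed.

Lemma pS l : (l <= N)%nat -> RInt (fun t => peval c l t * S t) (-1) 1 = b l.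
Proof.
  intros Hl.
  rewrite (RInt_extR _ (fun t => sum_f_R0 (fun j => b j * (peval c l t * peval c j t)) N)).
  2:{ intros. unfold S. rewrite scal_sum. apply sum_eq. intros; ring. }
  rewrite RInt_sumR. rewrite <- (sum_delta b l N Hl). apply sum_eq. intros i Hi.
  rewrite RInt_scalR, Horth. reflexivity.
  apply cont_mult; apply pc.
  intros i. apply cont_mult. apply cont_const. apply cont_mult; apply pc.
Qed.

Lemma SS : RInt (fun t => S t * S t) (-1) 1 = sum_f_R0 (fun l => b l * b l) N.
Proof.
  rewrite (RInt_extR _ (fun t => sum_f_R0 (fun j => b j * (peval c j t * S t)) N)).
  2:{ intros. unfold S at 1. rewrite Rmult_comm, scal_sum. apply sum_eq. intros; ring. }
  rewrite RInt_sumR. apply sum_eq. intros i Hi. rewrite RInt_scalR. rewrite pS by auto. reflexivity.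
  apply cont_mult. apply pc. apply Scont.
  intros i. apply cont_mult. apply cont_const. apply cont_mult. apply pc. apply Scont.
Qed.

Lemma bessel : sum_f_R0 (fun l => b l ^ 2) N <= RInt (fun t => Q t * Q t) (-1) 1.
Proof.
  assert (P : 0 <= RInt (fun t => (Q t - S t) * (Q t - S t)) (-1) 1).
  { apply RInt_ge_0. lra. apply cont_exRInt. apply cont_mult; apply cont_minus; auto; apply Scont.
    intros x _. apply Rle_0_sqr. }
  rewrite (RInt_extR _ (fun t => (Q t * Q t - 2 * (S t * Q t)) + S t * S t)) in P.
  2:{ intros; ring. }
  pose proof Scont as HS.
  rewrite RInt_plusR, RInt_minusR, RInt_scalR, SQ, SS in P.
  replace (sum_f_R0 (fun l => b l ^ 2) N) with (sum_f_R0 (fun l => b l * b l) N). lra.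
  apply sum_eq; intros; ring.
  all: repeat first [apply cont_mult | apply cont_minus | apply cont_pol_plus | apply cont_const | assumption].
Qed.

End Bessel.

Lemma cnt a w N :
  sum_f_R0 (fun l => if andb (a <=? l)%nat (l <=? a + w)%nat then 1 else 0) N <= INR (S N - a)
  /\ sum_f_R0 (fun l => if andb (a <=? l)%nat (l <=? a + w)%nat then 1 else 0) N <= INR w + 1.
Proof.
  pose proof (pos_INR w).
  induction N.
  - simpl. destruct a; simpl; [destruct (w <=? w)%nat|]; simpl; split; lra.
  - destruct IHN as [I1 I2]. rewrite tech5.
    destruct (a <=? S N)%nat eqn:E1; destruct (S N <=? a + w)%nat eqn:E2; cbn [andb].
    + apply Nat.leb_le in E1. apply Nat.leb_le in E2.
      replace (S (S N) - a)%nat with (S (S N - a)) by lia. rewrite S_INR. split. lra.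
      assert (INR (S N - a) <= INR w) by (apply le_INR; lia). lra.
    + split; [|lra]. assert (INR (S N - a) <= INR (S (S N) - a)) by (apply le_INR; lia). lra.
    + split; [|lra]. assert (INR (S N - a) <= INR (S (S N) - a)) by (apply le_INR; lia). lra.
    + split; [|lra]. assert (INR (S N - a) <= INR (S (S N) - a)) by (apply le_INR; lia). lra.
Qed.

Lemma sum_lin (u v : nat -> R) al be N :
  sum_f_R0 (fun l => u l * al + v l * be) N = al * sum_f_R0 u N + be * sum_f_R0 v N.
Proof. induction N. simpl; ring. rewrite !tech5, IHN. ring. Qed.

Section Final.
Variable c : nat -> nat -> R.
Hypothesis Hlead : forall k, 0 < c k k.
Hypothesis Horth : forall k l,
      RInt (fun t => peval c k t * peval c l t) (-1) 1 = if Nat.eq_dec k l then 1 else 0.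
Variables d k : nat.
Let f := fun t => peval c d t * peval c k t.
Variable Af : R -> R.
Hypothesis HAf : forall t, is_derive Af t (f t).
Hypothesis HAfp : pol (S (d + k)) Af.
Let Q := fun t => Af 1 - Af t.

Let sq j := fun t => peval c j t * peval c j t.

Lemma sqcont j : cont (sq j).
Proof. apply cont_mult; apply pcont. Qed.

Lemma sq_int j r : -1 <= r <= 1 -> RInt (sq j) r 1 <= 1.
Proof.
  intros Hr.
  assert (E : plus (RInt (sq j) (-1) r) (RInt (sq j) r 1) = RInt (sq j) (-1) 1).
  { apply RInt_Chasles; apply cont_exRInt; apply sqcont. }
  unfold sq at 3 in E. rewrite Horth in E. destruct (Nat.eq_dec j j); [|lia].
  assert (0 <= RInt (sq j) (-1) r).
  { apply RInt_ge_0. lra. apply cont_exRInt; apply sqcont. intros; apply Rle_0_sqr. }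
  unfold plus in E; simpl in E. lra.
Qed.

Lemma Qbound r : -1 <= r <= 1 -> Rabs (Q r) <= (RInt (sq d) r 1 + RInt (sq k) r 1) / 2.
Proof.
  intros Hr.
  assert (EQ : Q r = RInt f r 1).
  { unfold Q. rewrite (RInt_anti Af f) by (auto; apply fcont). reflexivity. }
  assert (Eh : RInt (fun t => 1/2 * (sq d t + sq k t)) r 1 = (RInt (sq d) r 1 + RInt (sq k) r 1) / 2).
  { rewrite RInt_scalR, RInt_plusR. lra. apply sqcont. apply sqcont.
    apply cont_pol_plus; apply sqcont. }
  assert (Eh' : RInt (fun t => -1/2 * (sq d t + sq k t)) r 1 = - ((RInt (sq d) r 1 + RInt (sq k) r 1) / 2)).
  { rewrite RInt_scalR, RInt_plusR. lra. apply sqcont. apply sqcont.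
    apply cont_pol_plus; apply sqcont. }
  assert (Ch : cont (fun t => sq d t + sq k t)) by (apply cont_pol_plus; apply sqcont).
  rewrite EQ. apply Rabs_le. split.
  - rewrite <- Eh'. apply RInt_le. lra. apply cont_exRInt. apply cont_mult. apply cont_const. auto.
    apply cont_exRInt. apply fcont.
    intros x _. unfold f, sq. pose proof (Rle_0_sqr (peval c d x + peval c k x)). unfold Rsqr in *. nra.
  - rewrite <- Eh. apply RInt_le. lra. apply cont_exRInt. apply fcont.
    apply cont_exRInt. apply cont_mult. apply cont_const. auto.
    intros x _. unfold f, sq. pose proof (Rle_0_sqr (peval c d x - peval c k x)). unfold Rsqr in *. nra.
Qed.

Lemma QQ_int1 : (1 <= d)%nat -> RInt (fun t => Q t * Q t) (-1) 1 <= 2.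
Proof.
  intros Hd.
  replace 2 with (RInt (fun _ => 1) (-1) 1).
  2:{ rewrite RInt_const. unfold scal; simpl; unfold mult; simpl; ring. }
  apply RInt_le. lra. apply cont_exRInt; apply cont_mult; apply (Qcont c d k Af HAf).
  apply cont_exRInt; apply cont_const.
  intros x Hx. pose proof (Qbound x ltac:(lra)).
  pose proof (sq_int d x ltac:(lra)). pose proof (sq_int k x ltac:(lra)).
  assert (Rabs (Q x) <= 1) by lra.
  assert (0 <= Rabs (Q x)) by apply Rabs_pos.
  rewrite <- (Rabs_mult (Q x) (Q x)) in * || idtac.
  assert (Q x * Q x = Rabs (Q x) * Rabs (Q x)).
  { rewrite <- Rabs_mult. rewrite Rabs_pos_eq. reflexivity. apply Rle_0_sqr. }
  nra.
Qed.

Lemma QQ_int0 : d = 0%nat -> RInt (fun t => Q t * Q t) (-1) 1 <= 7/6.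
Proof.
  intros Hd.
  assert (Hc : forall t, peval c 0 t = c 0%nat 0%nat) by (intros; unfold peval; simpl; ring).
  assert (H0 : 2 * (c 0%nat 0%nat * c 0%nat 0%nat) = 1).
  { pose proof (Horth 0 0) as H. destruct (Nat.eq_dec 0 0); [|lia].
    rewrite (RInt_extR _ (fun _ => c 0%nat 0%nat * c 0%nat 0%nat)) in H.
    rewrite RInt_const in H. unfold scal in H; simpl in H; unfold mult in H; simpl in H.
    assert (X: (1 - -1) * (c 0%nat 0%nat * c 0%nat 0%nat) = 1) by exact H. lra.
    intros; rewrite Hc; reflexivity. }
  assert (Hs : forall r, RInt (sq d) r 1 = (1 - r) / 2).
  { intros r. rewrite (RInt_extR _ (fun _ => c 0%nat 0%nat * c 0%nat 0%nat)).
    rewrite RInt_const. unfold scal; simpl; unfold mult; simpl.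
    change ((1 - r) * (c 0%nat 0%nat * c 0%nat 0%nat) = (1 - r) / 2).
    replace (c 0%nat 0%nat * c 0%nat 0%nat) with (1/2) by lra. field.
    intros; unfold sq; rewrite Hd, Hc; reflexivity. }
  assert (G : RInt (fun t => (3 - t) / 4 * ((3 - t) / 4)) (-1) 1 = 7/6).
  { rewrite (RInt_anti (fun t => - (3 - t) ^ 3 / 48)).
    assert (E: - (3 - 1) ^ 3 / 48 - - (3 - -1) ^ 3 / 48 = 7 / 6) by field. exact E.
    intros t. auto_derive. auto. field.
    apply cont_mult; apply (pol_cont 1);
      apply pol_ext with (fun t => 3/4 * 1 + (-1/4) * t); try (intros; field);
      exists (fun i => match i with O => 3/4 | _ => -1/4 end); intros; simpl; ring. }
  rewrite <- G. apply RInt_le. lra. apply cont_exRInt; apply cont_mult; apply (Qcont c d k Af HAf).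
  apply cont_exRInt. apply cont_mult; apply (pol_cont 1);
      apply pol_ext with (fun t => 3/4 * 1 + (-1/4) * t); try (intros; field);
      exists (fun i => match i with O => 3/4 | _ => -1/4 end); intros; simpl; ring.
  intros x Hx. pose proof (Qbound x ltac:(lra)). rewrite Hs in H.
  pose proof (sq_int k x ltac:(lra)).
  assert (Rabs (Q x) <= (3 - x) / 4) by lra.
  assert (0 <= Rabs (Q x)) by apply Rabs_pos.
  assert (Q x * Q x = Rabs (Q x) * Rabs (Q x)).
  { rewrite <- Rabs_mult. rewrite Rabs_pos_eq. reflexivity. apply Rle_0_sqr. }
  nra.
Qed.

End Final.

Lemma abs_amgm (x lam : R) : 0 < lam -> Rabs x <= lam / 2 + x ^ 2 * (1 / (2 * lam)).
Proof.
  intros Hl. pose proof (pow2_abs x). pose proof (Rle_0_sqr (Rabs x - lam)). unfold Rsqr in *.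
  assert (x ^ 2 * (1 / (2 * lam)) = Rabs x ^ 2 / (2 * lam)) by (rewrite H; field; lra).
  rewrite H1. apply (Rmult_le_reg_l (2 * lam)). lra.
  replace (2 * lam * (lam / 2 + Rabs x ^ 2 / (2 * lam))) with (lam * lam + Rabs x ^ 2) by (field; lra).
  nra.
Qed.

Theorem lemma3p5 (c : nat -> nat -> R)
  (Hlead : forall k, 0 < c k k)
  (Horth : forall k l,
      RInt (fun t => peval c k t * peval c l t) (-1) 1 = if Nat.eq_dec k l then 1 else 0)
  (d : nat) :
  forall k N, sum_f_R0 (fun l => Rabs (bmat c d k l)) N <= 3 * INR d + 2.
Proof.
  intros k N.
  destruct (pol_anti (d + k) (fun t => peval c d t * peval c k t)) as [Af [HAfp HAf]].
  { apply pol_mul; apply pol_peval. }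
  set (b := fun l => RInt (fun tau => (fun t => Af 1 - Af t) tau * peval c l tau) (-1) 1).
  assert (C1 : forall l, bmat c d k l = b l).
  { intros l. destruct (pol_anti l (peval c l) (pol_peval c l)) as [Al [HAlp HAl]].
    exact (bmat_eq c d k Af HAf l Al HAl). }
  set (chi := fun l => if andb (k <=? l + d + 1)%nat (l <=? k + d + 1)%nat then 1 else 0).
  assert (C2 : forall lam, 0 < lam -> forall l, Rabs (b l) <= chi l * (lam / 2) + b l ^ 2 * (1 / (2 * lam))).
  { intros lam Hlam l. unfold chi.
    destruct (k <=? l + d + 1)%nat eqn:E1; destruct (l <=? k + d + 1)%nat eqn:E2; cbn [andb].
    - rewrite Rmult_1_l. apply abs_amgm; auto.
    - apply Nat.leb_gt in E2. unfold b. rewrite (band_hi c Hlead Horth d k Af HAfp l) by lia.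
      rewrite Rabs_R0. simpl; lra.
    - apply Nat.leb_gt in E1. rewrite <- C1.
      destruct (pol_anti l (peval c l) (pol_peval c l)) as [Al [HAlp HAl]].
      rewrite (band_lo c Hlead Horth d k l Al HAl HAlp) by lia. rewrite Rabs_R0. simpl; lra.
    - apply Nat.leb_gt in E1. rewrite <- C1.
      destruct (pol_anti l (peval c l) (pol_peval c l)) as [Al [HAlp HAl]].
      rewrite (band_lo c Hlead Horth d k l Al HAl HAlp) by lia. rewrite Rabs_R0. simpl; lra. }
  assert (Cx : sum_f_R0 chi N <= INR (2 * d + 2) + 1).
  { set (a := (k - (d + 1))%nat).
    apply Rle_trans with (sum_f_R0 (fun l => if andb (a <=? l)%nat (l <=? a + (2 * d + 2))%nat then 1 else 0) N).
    - apply sum_Rle. intros l _. unfold chi.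
      destruct (k <=? l + d + 1)%nat eqn:E1; destruct (l <=? k + d + 1)%nat eqn:E2; cbn [andb];
      destruct (a <=? l)%nat eqn:E3; destruct (l <=? a + (2 * d + 2))%nat eqn:E4; cbn [andb]; try lra.
      1-3: apply Nat.leb_le in E1; apply Nat.leb_le in E2;
        first [apply Nat.leb_gt in E3 | apply Nat.leb_gt in E4]; unfold a in *; lia.
    - apply (cnt a (2 * d + 2) N). }
  assert (CB : sum_f_R0 (fun l => b l ^ 2) N <= RInt (fun t => (fun t => Af 1 - Af t) t * (fun t => Af 1 - Af t) t) (-1) 1).
  { apply (bessel c Horth (fun t => Af 1 - Af t) (Qcont c d k Af HAf) N). }
  assert (Main : forall lam, 0 < lam -> sum_f_R0 (fun l => Rabs (bmat c d k l)) N <=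
     lam / 2 * sum_f_R0 chi N + 1 / (2 * lam) * sum_f_R0 (fun l => b l ^ 2) N).
  { intros lam Hlam. rewrite <- sum_lin. apply sum_Rle. intros l _. rewrite C1. apply C2; auto. }
  rewrite plus_INR, mult_INR in Cx. simpl INR in Cx.
  destruct d as [|d'].
  - pose proof (QQ_int0 c Horth 0 k Af HAf eq_refl) as Q0.
    pose proof (Main (2/3) ltac:(lra)). simpl INR in *.
    replace (2/3/2) with (1/3) in H by field. replace (1 / (2 * (2 / 3))) with (3/4) in H by field. lra.
  - pose proof (QQ_int1 c Horth (S d') k Af HAf ltac:(lia)) as Q1.
    pose proof (Main 1 ltac:(lra)). pose proof (pos_INR d'). rewrite S_INR in *.
    replace (1/(2*1)) with (1/2) in H by field. lra.
Qed.
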